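(* Let $\Sigma$ be a finite set, $I\subseteq\Sigma\times\Sigma$ a symmetric irreflexive relation, and $M=M(\Sigma,I)$ the free partially commutative monoid. Let $\Sigma_0\subseteq\Sigma$, $I_0=(\Sigma_0\times\Sigma_0)\cap I$ and $M_0=M(\Sigma_0,I_0)$, regarded as a submonoid of $M$ via the canonical map. Then the monoid ring $\mathbb{Z}M$ is a free left $\mathbb{Z}M_0$-module.
   Context: For a finite alphabet $\Sigma$ and a symmetric irreflexive relation $I\subseteq \Sigma\times\Sigma$ (the commutation relation), the free partially commutative monoid $M(\Sigma,I)$ is the monoid with presentation $\langle \Sigma \mid ab=ba \text{ for all } (a,b)\in I\rangle$. The canonical map $M(\Sigma_0,I_0)\to M(\Sigma,I)$ sends the class of a word over $\Sigma_0$ to its class in $M(\Sigma,I)$; $\mathbb{Z}M_0$ acts on $\mathbb{Z}M$ by left multiplication. *)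

(* Defs.v *)
From HB Require Import structures.
From mathcomp Require Import all_boot all_order all_algebra generic_quotient.
From mathcomp Require Import finmap boolp.
From Stdlib Require Relations.

Set Implicit Arguments.
Unset Strict Implicit.
Unset Printing Implicit Defensive.

Import GRing.Theory.
Local Open Scope fset_scope.

(* Free partially commutative monoid M(T, I) = < T | ab = ba for I a b >.   *)
Section Trace.
Variables (T : finType) (I : rel T).

Definition swap_step (u v : seq T) : Prop :=
  exists (x y : seq T) (a b : T),
    I a b /\ u = x ++ a :: b :: y /\ v = x ++ b :: a :: y.

Definition trace_eq : seq T -> seq T -> Prop :=
  Relations.Relation_Operators.clos_refl_sym_trans (seq T) swap_step.

Definition trace_eqb (u v : seq T) : bool := `[< trace_eq u v >].

Lemma trace_eqb_refl : reflexive trace_eqb.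
Proof. by move=> u; apply/asboolP; apply: Relations.Relation_Operators.rst_refl. Qed.

Lemma trace_eqb_sym : symmetric trace_eqb.
Proof.
move=> u v; apply/asboolP/asboolP => H; exact: Relations.Relation_Operators.rst_sym.
Qed.

Lemma trace_eqb_trans : transitive trace_eqb.
Proof.
move=> v u w /asboolP H1 /asboolP H2; apply/asboolP; exact: Relations.Relation_Operators.rst_trans H1 H2.
Qed.

Canonical trace_equiv : equiv_rel (seq T) :=
  EquivRel trace_eqb trace_eqb_refl trace_eqb_sym trace_eqb_trans.

Definition trace := {eq_quot trace_eqb}%qT.

Definition tword (w : seq T) : trace := (\pi_trace w)%qT.
Definition tmul (x y : trace) : trace := tword (repr x ++ repr y).
Definition tone : trace := tword [::].

Definition mring := {fsfun trace -> int with 0%R}.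

Definition mr_zero : mring := [fsfun].

Definition mr_add (f g : mring) : mring :=
  [fsfun m in finsupp f `|` finsupp g => (f m + g m)%R].

Definition mr_mul (f g : mring) : mring :=
  [fsfun m in tmul @2` (finsupp f, fun _ => finsupp g) =>
     (\sum_(x <- finsupp f) \sum_(y <- finsupp g)
        (if tmul x y == m then f x * g y else 0))%R].

End Trace.

Definition mr_push (T' T : finType) (I' : rel T') (I : rel T)
  (phi : trace I' -> trace I) (r : mring I') : mring I :=
  [fsfun m in phi @` finsupp r =>
     (\sum_(x <- finsupp r) (if phi x == m then r x else 0))%R].

Definition tmap (T' T : finType) (I' : rel T') (I : rel T) (h : T' -> T)
  (x : trace I') : trace I := tword I (map h (repr x)).

Definition subalph (T : finType) (S0 : {set T}) : finType := {x : T | x \in S0}.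
Definition restr_rel (T : finType) (I : rel T) (S0 : {set T}) : rel (subalph S0) :=
  fun a b => I (val a) (val b).

Definition lincomb (R V : Type) (v0 : V) (add : V -> V -> V)
  (act : R -> V -> V) (s : seq (R * V)) : V :=
  foldr (fun p acc => add (act p.1 p.2) acc) v0 s.

Definition free_lmodule (R V : eqType) (r0 : R) (v0 : V)
  (add : V -> V -> V) (act : R -> V -> V) : Prop :=
  exists B : V -> Prop,
    (forall v : V, exists s : seq (R * V),
        (forall p, p \in s -> B p.2) /\ v = lincomb v0 add act s) /\
    (forall s : seq (R * V),
        uniq (map snd s) -> (forall p, p \in s -> B p.2) ->
        lincomb v0 add act s = v0 -> forall p, p \in s -> p.1 = r0).

Arguments restr_rel [T] I S0 _ _.
Arguments tmap [T' T] I' I h x.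

(* Main.v *)
Require Import Defs.
From HB Require Import structures.
From mathcomp Require Import all_boot all_order all_algebra generic_quotient.
From mathcomp Require Import finmap boolp.
From Stdlib Require Relations.
Import Relations.Relation_Operators.

Set Implicit Arguments.
Unset Strict Implicit.
Unset Printing Implicit Defensive.

Section Comb.
Variables (T : finType) (I : rel T) (S0 : {set T}).
Hypothesis I_sym : symmetric I.

Definition toP (R : seq T) (c : T) := (c \in S0) && all (I c) R.

Fixpoint dec (R : seq T) (w : seq T) : seq T * seq T :=
  match w with
  | [::] => ([::], [::])
  | c :: w' => if toP R c then (c :: (dec R w').1, (dec R w').2)
               else ((dec (rcons R c) w').1, c :: (dec (rcons R c) w').2)
  end.

Lemma dec_eqR w R1 R2 : R1 =i R2 -> dec R1 w = dec R2 w.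
Proof.
elim: w R1 R2 => [|c w IH] R1 R2 E //=.
have -> : toP R1 c = toP R2 c by rewrite /toP (eq_all_r E).
have E' : rcons R1 c =i rcons R2 c by move=> z; rewrite !mem_rcons !inE E.
by rewrite (IH _ _ E) (IH _ _ E').
Qed.

Lemma toP_rcons R c a : toP (rcons R c) a = toP R a && I a c.
Proof. by rewrite /toP all_rcons; case: (a \in S0); case: (I a c); case: all. Qed.

Definition swapR (J : rel T) (P : pred T) (p p' : seq T) :=
  p = p' \/ exists x y a b, [/\ J a b, P a, P b, p = x ++ a :: b :: y & p' = x ++ b :: a :: y].

Lemma swapR_cons J P c p p' : swapR J P p p' -> swapR J P (c :: p) (c :: p').
Proof.
case=> [->|[x [y [a [b [H1 H2 H3 -> ->]]]]]]; first by left.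
by right; exists (c :: x), y, a, b.
Qed.

Lemma dec_swap x y a b R : I a b ->
  swapR I (mem S0) (dec R (x ++ a :: b :: y)).1 (dec R (x ++ b :: a :: y)).1 /\
  swapR I predT (dec R (x ++ a :: b :: y)).2 (dec R (x ++ b :: a :: y)).2.
Proof.
move=> Iab; elim: x R => [|c x IH] R /=; last first.
  by case: (toP R c) => /=; have [h1 h2] := IH R; have [h3 h4] := IH (rcons R c);
     split => //; apply: swapR_cons.
rewrite !toP_rcons (I_sym b a) Iab !andbT.
case Ha: (toP R a); case Hb: (toP R b) => /=.
- split; last by left.
  right; exists [::], (dec R y).1, a, b; split => //.
  + by move: Ha => /andP[].
  + by move: Hb => /andP[].
- by split; left.
- by split; left.
- rewrite (@dec_eqR y (rcons (rcons R a) b) (rcons (rcons R b) a)); last first.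
    by move=> z; rewrite !(mem_rcons, inE); case: (z == a); case: (z == b); rewrite ?orbT.
  split; first by left.
  by right; exists [::], (dec (rcons (rcons R b) a) y).2, a, b.
Qed.

Lemma dec_S0 R w z : z \in (dec R w).1 -> z \in S0.
Proof.
elim: w R => [|c w IH] R //=; case H: (toP R c) => /=; last exact: IH.
by rewrite inE => /orP[/eqP ->|]; [move: H => /andP[] | exact: IH].
Qed.

Lemma dec_comm R w z : z \in (dec R w).1 -> all (I z) R.
Proof.
elim: w R => [|c w IH] R //=; case H: (toP R c) => /=.
  by rewrite inE => /orP[/eqP ->|]; [move: H => /andP[] | exact: IH].
by move=> /IH; rewrite all_rcons => /andP[].
Qed.

Lemma dec_nil R w : (dec R w).1 = [::] -> (dec R w).2 = w.
Proof.
elim: w R => [|c w IH] R //=; case: (toP R c) => //= /IH -> //.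
Qed.

Lemma dec_idem R w : dec R (dec R w).2 = ([::], (dec R w).2).
Proof.
elim: w R => [|c w IH] R //=; case H: (toP R c) => /=; first exact: IH.
by rewrite H IH.
Qed.

Lemma dec_pre (u : seq T) w : all (mem S0) u ->
  dec [::] (u ++ w) = (u ++ (dec [::] w).1, (dec [::] w).2).
Proof.
elim: u => [|c u IH] /=; first by case: dec.
by move=> /andP[Hc Hu]; rewrite /toP Hc /= IH.
Qed.

Lemma trace_eq_ctx (x y u v : seq T) : trace_eq I u v -> trace_eq I (x ++ u ++ y) (x ++ v ++ y).
Proof.
elim=> [u1 v1 [x1 [y1 [a [b [H [-> ->]]]]]]| u1 | u1 v1 _ IH | u1 v1 w1 _ IH1 _ IH2].
- by apply: rst_step; exists (x ++ x1), (y1 ++ y), a, b; split => //; split; rewrite -!catA.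
- exact: rst_refl.
- exact: rst_sym.
- exact: rst_trans IH2.
Qed.

Lemma trace_eq_catr (u v y : seq T) : trace_eq I u v -> trace_eq I (u ++ y) (v ++ y).
Proof. by move=> H; have := @trace_eq_ctx [::] y u v H. Qed.

Lemma trace_eq_cons c (u v : seq T) : trace_eq I u v -> trace_eq I (c :: u) (c :: v).
Proof. by move=> H; have := @trace_eq_ctx [:: c] [::] u v H; rewrite !cats0. Qed.

Lemma move_past c (s t : seq T) : all (I c) s -> trace_eq I (c :: s ++ t) (s ++ c :: t).
Proof.
elim: s => [|d s IH] /=; first by move=> _; apply: rst_refl.
move=> /andP[Icd Hs]; apply: rst_trans (trace_eq_cons d (IH Hs)).
by apply: rst_step; exists [::], (s ++ t), c, d.
Qed.

Lemma dec_correct R w : trace_eq I w ((dec R w).1 ++ (dec R w).2).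
Proof.
elim: w R => [|c w IH] R /=; first exact: rst_refl.
case H: (toP R c) => /=; first exact: trace_eq_cons.
apply: rst_trans (trace_eq_cons c (IH (rcons R c))) _.
apply: move_past; apply/allP => z Hz.
have := dec_comm Hz; rewrite all_rcons => /andP[Izc _]; by rewrite I_sym.
Qed.

End Comb.

Section Tr.
Variables (T : finType) (I : rel T) (S0 : {set T}).
Hypothesis I_sym : symmetric I.
Local Notation I0 := (restr_rel I S0).
Local Notation T0 := (subalph S0).

Lemma teq_trans (U : finType) (J : rel U) u v w : trace_eq J u v -> trace_eq J v w -> trace_eq J u w.
Proof. exact: rst_trans. Qed.
Lemma teq_sym (U : finType) (J : rel U) u v : trace_eq J u v -> trace_eq J v u.
Proof. exact: rst_sym. Qed.
Lemma teq_refl (U : finType) (J : rel U) u : trace_eq J u u.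
Proof. exact: rst_refl. Qed.
Lemma teq_step (U : finType) (J : rel U) u v : swap_step J u v -> trace_eq J u v.
Proof. exact: rst_step. Qed.

Lemma trace_eq_cat (J : rel T) u u' v v' : trace_eq J u u' -> trace_eq J v v' ->
  trace_eq J (u ++ v) (u' ++ v').
Proof.
move=> H1 H2; apply: teq_trans (trace_eq_catr v H1) _.
have H := trace_eq_ctx u' [::] H2; rewrite !cats0 in H; exact: H.
Qed.

Lemma tword_eq (U : finType) (J : rel U) (u v : seq U) : tword J u = tword J v <-> trace_eq J u v.
Proof.
split.
  by move=> /eqmodP /asboolP.
by move=> H; apply/eqmodP; apply/asboolP.
Qed.

Lemma tword_repr (U : finType) (J : rel U) (x : trace J) : tword J (repr x) = x.
Proof. exact: reprK. Qed.

Lemma repr_tword (U : finType) (J : rel U) (u : seq U) : trace_eq J (repr (tword J u)) u.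
Proof. by apply/tword_eq; rewrite /tword reprK. Qed.

Lemma map_pmap_insub (p : seq T) : all (mem S0) p -> map val (pmap (insub : T -> option T0) p) = p.
Proof.
elim: p => [|c p IH] //= /andP[Hc Hp].
case: insubP => [u0 _ Hu /=|]; [by rewrite Hu IH | by rewrite Hc].
Qed.

Lemma pmap_insub_map (u : seq T0) : pmap (insub : T -> option T0) (map val u) = u.
Proof. by elim: u => [|c u IH] //=; rewrite valK /= IH. Qed.

Lemma swapR_trace p p' : swapR I predT p p' -> trace_eq I p p'.
Proof.
case=> [->|[x [y [a [b [Iab _ _ -> ->]]]]]]; first exact: teq_refl.
by apply: teq_step; exists x, y, a, b.
Qed.

Lemma swapR_trace0 p p' : swapR I (mem S0) p p' ->
  trace_eq I0 (pmap (insub : T -> option T0) p) (pmap (insub : T -> option T0) p').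
Proof.
case=> [->|[x [y [a [b [Iab Ha Hb -> ->]]]]]]; first exact: teq_refl.
rewrite !pmap_cat /= (insubT (mem S0) Ha) (insubT (mem S0) Hb) /=.
by apply: teq_step; exists (pmap insub x), (pmap insub y), (Sub a Ha), (Sub b Hb); split.
Qed.

Lemma swapR_nil (J : rel T) (P : pred T) (p p' : seq T) : swapR J P p p' -> (p == [::]) = (p' == [::]).
Proof. by case=> [->|[x [y [a [b [_ _ _ -> ->]]]]]] //; case: x. Qed.

Lemma dec_wd R w w' : trace_eq I w w' ->
  [/\ trace_eq I (dec I S0 R w).2 (dec I S0 R w').2,
      trace_eq I0 (pmap (insub : T -> option T0) (dec I S0 R w).1)
                  (pmap (insub : T -> option T0) (dec I S0 R w').1) &
      ((dec I S0 R w).1 == [::]) = ((dec I S0 R w').1 == [::])].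
Proof.
elim=> [u v [x [y [a [b [Iab [-> ->]]]]]] | u | u v _ [h1 h2 h3] | u v z _ [h1 h2 h3] _ [h4 h5 h6]].
- have [H1 H2] := dec_swap S0 I_sym x y R Iab.
  split; [exact: swapR_trace | exact: swapR_trace0 | exact: swapR_nil H1].
- by split => //; exact: teq_refl.
- by split; [exact: teq_sym | exact: teq_sym | ].
- by split; [exact: rst_trans h4 | exact: rst_trans h5 | rewrite h3].
Qed.

Lemma map_val_trace (u v : seq T0) : trace_eq I0 u v -> trace_eq I (map val u) (map val v).
Proof.
elim=> [u1 v1 [x [y [a [b [Iab [-> ->]]]]]] | u1 | u1 v1 _ IH | u1 v1 w1 _ IH1 _ IH2].
- by apply: teq_step; exists (map val x), (map val y), (val a), (val b); rewrite !map_cat.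
- exact: teq_refl.
- exact: teq_sym.
- exact: rst_trans IH2.
Qed.

Definition D1 (m : trace I) : trace I0 := tword I0 (pmap insub (dec I S0 [::] (repr m)).1).
Definition D2 (m : trace I) : trace I := tword I (dec I S0 [::] (repr m)).2.
Definition reduced (t : trace I) := (dec I S0 [::] (repr t)).1 == [::].

Lemma tmapE (x : trace I0) : tmap I0 I val x = tword I (map val (repr x)).
Proof. by []. Qed.

Lemma uniq_dec (x : trace I0) (t : trace I) : reduced t ->
  D1 (tmul (tmap I0 I val x) t) = x /\ D2 (tmul (tmap I0 I val x) t) = t.
Proof.
move=> Ht.
set m := tmul _ _.
have Hm : trace_eq I (repr m) (map val (repr x) ++ repr t).
  apply: teq_trans (repr_tword _ _) _.
  apply: trace_eq_cat; [exact: repr_tword | exact: teq_refl].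
have [h1 h2 _] := dec_wd [::] Hm.
have Hall : all (mem S0) (map val (repr x)).
  by apply/allP => z /mapP[z' _ ->]; exact: (valP z').
rewrite dec_pre // in h1 h2.
move: Ht; rewrite /reduced => /eqP Ht.
rewrite Ht cats0 pmap_insub_map /= (dec_nil Ht) in h1 h2.
split.
- rewrite /D1 -[RHS]tword_repr; apply/tword_eq; exact: h2.
- rewrite /D2 -[RHS]tword_repr; apply/tword_eq; exact: h1.
Qed.

Lemma reduced_D2 m : reduced (D2 m).
Proof.
rewrite /reduced /D2.
have [_ _ h3] := dec_wd [::] (repr_tword I (dec I S0 [::] (repr m)).2).
by rewrite h3 dec_idem.
Qed.

Lemma D_correct m : m = tmul (tmap I0 I val (D1 m)) (D2 m).
Proof.
rewrite /tmul tmapE -[LHS]tword_repr; apply/tword_eq.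
apply: teq_trans (dec_correct S0 I_sym [::] (repr m)) _.
apply: teq_sym; apply: trace_eq_cat; last exact: repr_tword.
apply: teq_trans (repr_tword _ _) _.
apply: teq_trans (map_val_trace (repr_tword _ _)) _.
rewrite map_pmap_insub; first exact: teq_refl.
by apply/allP => z; apply: dec_S0.
Qed.

End Tr.

Import GRing.Theory.
Local Open Scope fset_scope.
Local Open Scope ring_scope.

Section Alg.
Variables (U : finType) (J : rel U).

Definition sd (c : int) (x : trace J) : mring J := [fsfun m in [fset x] => c].

Lemma sdE c x (m : trace J) : sd c x m = if m == x then c else 0.
Proof. by rewrite /sd fsfun_fun in_fset1. Qed.

Lemma zeroE (m : trace J) : mr_zero J m = 0.
Proof. by rewrite /mr_zero fsfun0E. Qed.

Lemma addE (f g : mring J) (m : trace J) : mr_add f g m = f m + g m.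
Proof.
rewrite /mr_add fsfun_fun; case: ifP => // /negbT.
rewrite in_fsetU negb_or => /andP[h1 h2].
by rewrite !fsfun_dflt.
Qed.

Lemma mulE (f g : mring J) (m : trace J) : mr_mul f g m =
  \sum_(x <- finsupp f) \sum_(y <- finsupp g) (if tmul x y == m then f x * g y else 0).
Proof.
rewrite /mr_mul fsfun_fun; case: ifP => // /negbT H.
rewrite big1_seq // => x /andP[_ Hx]; rewrite big1_seq // => y /andP[_ Hy].
case: eqP => // E; exfalso; move/negP: H; apply; rewrite -E.
by apply/imfset2P; exists x => //; exists y.
Qed.

Lemma cover_supp (g : mring J) (A : {fset trace J}) (G : trace J -> int -> int) :
  finsupp g `<=` A -> (forall x, G x 0 = 0) ->
  \sum_(x <- finsupp g) G x (g x) = \sum_(x <- A) G x (g x).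
Proof.
move=> sub G0; apply: big_fset_incl => // x _ Hx.
by rewrite fsfun_dflt.
Qed.

Lemma finsupp_sd c x : finsupp (sd c x) `<=` [fset x].
Proof.
apply/fsubsetP => z; rewrite mem_finsupp sdE in_fset1.
by case: (z == x); rewrite ?eqxx.
Qed.

Lemma sum_pred1 (K : eqType) (r : seq K) (a : K) (F : K -> int) : uniq r ->
  \sum_(i <- r) (if i == a then F i else 0) = if a \in r then F a else 0.
Proof.
elim: r => [|b r IH] /=; first by rewrite big_nil.
move=> /andP[Hb Hu]; rewrite big_cons IH // inE.
case: (eqVneq b a) => [<-|ne] /=; last by rewrite add0r.
by rewrite (negbTE Hb) addr0.
Qed.

Lemma lincombE (R : eqType) (act : R -> mring J -> mring J) s m :
  lincomb (mr_zero J) (@mr_add U J) act s m = \sum_(p <- s) act p.1 p.2 m.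
Proof.
elim: s => [|p s IH] /=; first by rewrite big_nil zeroE.
by rewrite big_cons addE IH.
Qed.

End Alg.

Section Push.
Variables (U' U : finType) (J' : rel U') (J : rel U) (phi : trace J' -> trace J).

Lemma pushE (r : mring J') (m : trace J) : mr_push phi r m = \sum_(x <- finsupp r) (if phi x == m then r x else 0).
Proof.
rewrite /mr_push fsfun_fun; case: ifP => // /negbT H.
rewrite big1_seq // => x /andP[_ Hx].
case: eqP => // E; exfalso; move/negP: H; apply; rewrite -E.
by apply/imfsetP; exists x.
Qed.

Lemma finsupp_push (r : mring J') : finsupp (mr_push phi r) `<=` phi @` finsupp r.
Proof.
apply/fsubsetP => z; rewrite mem_finsupp /mr_push fsfun_fun.
by case: ifP => //; rewrite eqxx.
Qed.

Lemma act_sd (r : mring J') (t m : trace J) :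
  mr_mul (mr_push phi r) (sd 1 t) m =
  \sum_(x <- finsupp r) (if tmul (phi x) t == m then r x else 0).
Proof.
rewrite mulE.
under eq_bigr => z _.
  rewrite (@cover_supp U J (sd 1 t) [fset t] (fun y v => if tmul z y == m then mr_push phi r z * v else 0)); 
    [| exact: finsupp_sd | by move=> y; case: ifP => //; rewrite mulr0].
  rewrite big_seq_fset1 sdE eqxx mulr1.
  over.
rewrite /= (@cover_supp U J (mr_push phi r) (phi @` finsupp r) (fun z v => if tmul z t == m then v else 0));
  [| exact: finsupp_push | by move=> ?; case: ifP].
rewrite (eq_bigr (fun z => \sum_(x <- finsupp r) (if z == phi x then (if tmul (phi x) t == m then r x else 0) else 0))); last first.
  move=> z _; rewrite pushE.
  case: ifP => H.
    by apply: eq_bigr => x _; rewrite eq_sym; case: eqP => // <-; rewrite H.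
  by rewrite big1 // => x _; case: eqP => // <-; rewrite H.
rewrite exchange_big /= big_seq [RHS]big_seq; apply: eq_bigr => x Hx.
by rewrite sum_pred1 ?fset_uniq // in_imfset.
Qed.

End Push.

Lemma sd_inj (U : finType) (J : rel U) (a b : trace J) : sd 1 a = sd 1 b -> a = b.
Proof.
move=> /(congr1 (fun g : mring J => g a)); rewrite !sdE eqxx.
by case: eqP => // _ /eqP; rewrite oner_eq0.
Qed.

Lemma sum_snd (A B : eqType) (s : seq (A * B)) (p : A * B) (F : A -> int) :
  uniq (map snd s) -> p \in s ->
  \sum_(q <- s) (if q.2 == p.2 then F q.1 else 0) = F p.1.
Proof.
elim: s => [|q s IH] //= /andP[Hq Hu]; rewrite big_cons inE => /orP[/eqP ->|Hp].
  rewrite eqxx big1_seq ?addr0 // => q' /andP[_ Hq'].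
  case: eqP => // E; exfalso; move/negP: Hq; apply; rewrite -E; exact: map_f.
have -> : (q.2 == p.2) = false.
  apply/negP => /eqP E; move/negP: Hq; apply; rewrite E; exact: map_f.
by rewrite add0r IH.
Qed.



Theorem lemma2p1 (T : finType) (I : rel T)
  (I_sym : symmetric I) (I_irr : irreflexive I) (S0 : {set T}) :
  free_lmodule (mr_zero (restr_rel I S0)) (mr_zero I) (@mr_add T I)
    (fun (r : mring (restr_rel I S0)) (f : mring I) =>
       mr_mul (mr_push (tmap (restr_rel I S0) I val) r) f).
Proof.
set I0 := restr_rel I S0.
set tm := tmap I0 I val.
exists (fun v => exists t, reduced S0 t /\ v = sd 1 t).
split.
  move=> f.
  exists [seq (sd (f m) (D1 S0 m), sd 1 (D2 S0 m)) | m <- finsupp f].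
  split.
    by move=> p /mapP [m _ ->]; exists (D2 S0 m); split => //; exact: reduced_D2.
  apply/fsfunP => m'; rewrite lincombE big_map /=.
  rewrite (eq_bigr (fun m => if m == m' then f m else 0%R)); last first.
    move=> m _; rewrite act_sd.
    rewrite (@cover_supp _ I0 _ [fset D1 S0 m]%fset (fun x v => if tmul (tm x) (D2 S0 m) == m' then v else 0));
      [| exact: finsupp_sd | by move=> ?; case: ifP].
    by rewrite big_seq_fset1 sdE eqxx -D_correct.
  rewrite sum_pred1 ?fset_uniq //; case: finsuppP => //.
move=> s Hu HB H0 p Hp.
have [t [Ht Ep]] := HB p Hp.
apply/fsfunP => x0; rewrite zeroE.
have := congr1 (fun g : mring I => g (tmul (tm x0) t)) H0.
rewrite /= lincombE zeroE.
have E : \sum_(q <- s) mr_mul (mr_push tm q.1) q.2 (tmul (tm x0) t) =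
   \sum_(q <- s) (if q.2 == p.2 then q.1 x0 else 0%R).
  apply: eq_big_seq => q Hq; have [tq [Htq Eq]] := HB q Hq.
  rewrite Eq Ep act_sd.
  have Heq : forall x, (tmul (tm x) tq == tmul (tm x0) t) = (x == x0) && (tq == t).
    move=> x; apply/eqP/andP => [E|[/eqP -> /eqP ->]] //.
    have [a1 a2] := uniq_dec I_sym x Htq.
    have [b1 b2] := uniq_dec I_sym x0 Ht.
    by split; apply/eqP; [rewrite -a1 -b1 E | rewrite -a2 -b2 E].
  under eq_bigr => x _ do rewrite Heq.
  have -> : (sd 1 tq == sd 1 t) = (tq == t).
    by apply/eqP/eqP => [/sd_inj|->].
  case: eqP => _; last by rewrite big1 // => x _; rewrite andbF.
  under eq_bigr => x _ do rewrite andbT.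
  by rewrite sum_pred1 ?fset_uniq //; case: finsuppP.
by rewrite E (@sum_snd _ _ s p (fun r : mring I0 => r x0)) // => ->.
Qed.
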